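(* In the setting described in the context, take $\delta_c=0$ and $\delta_s>0$, so that the problem becomes the CRLB minimization problem $\max\{-\delta_s\,\mathrm{tr}(\mathbf F(\mathbf W)^{-1}):\mathbf W=[\mathbf W_c,\mathbf W_s]\in\mathbb C^{N_t\times(K+N_s)},\ \mathrm{tr}(\mathbf W\mathbf W^H)\le P_t\}$. Then every optimal solution $\mathbf W^\diamond=[\mathbf W_c^\diamond,\mathbf W_s^\diamond]$ of this problem satisfies $\mathrm{rank}(\mathbf W_s^\diamond)\le 3M$.
   Context: Positive integers $N_t,N_r,K,M,L$, nonnegative integer $N_s$; $\sigma_s^2>0$; $P_t>0$. $\mathbf W_c\in\mathbb C^{N_t\times K}$, $\mathbf W_s\in\mathbb C^{N_t\times N_s}$, $\mathbf R_x=\mathbf W_c\mathbf W_c^H+\mathbf W_s\mathbf W_s^H$. Sensing model: differentiable $\mathbf a:\mathbb R^2\to\mathbb C^{N_t}$, $\mathbf b:\mathbb R^2\to\mathbb C^{N_r}$; parameters $\theta_m,\phi_m\in\mathbb R,\alpha_m\in\mathbb C$ ($m=1,\dots,M$); $\mathbf A=[\mathbf a(\theta_m,\phi_m)]_m$, $\mathbf B=[\mathbf b(\theta_m,\phi_m)]_m$, $\mathbf U=\mathrm{diag}(\alpha_m)$; $\dot{\mathbf A}_\theta,\dot{\mathbf A}_\phi,\dot{\mathbf B}_\theta,\dot{\mathbf B}_\phi$ have $m$-th columns the partial derivatives of $\mathbf a$ resp. $\mathbf b$ w.r.t. first resp. second argument at $(\theta_m,\phi_m)$. $\mathbf F(\mathbf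 W)=\frac{2L}{\sigma_s^2}\begin{bmatrix}\Re\mathbf F_{11}&\Re\mathbf F_{12}&\Re\mathbf F_{13}&-\Im\mathbf F_{13}\\ \Re\mathbf F_{12}^{\mathsf T}&\Re\mathbf F_{22}&\Re\mathbf F_{23}&-\Im\mathbf F_{23}\\ \Re\mathbf F_{13}^{\mathsf T}&\Re\mathbf F_{23}^{\mathsf T}&\Re\mathbf F_{33}&-\Im\mathbf F_{33}\\ -\Im\mathbf F_{13}^{\mathsf T}&-\Im\mathbf F_{23}^{\mathsf T}&-\Im\mathbf F_{33}^{\mathsf T}&\Re\mathbf F_{33}\end{bmatrix}$ with $\mathbf F_{11}=(\mathbf U\mathbf A^H\mathbf R_x\mathbf A\mathbf U^H)^{\mathsf T}\odot(\dot{\mathbf B}_\theta^H\dot{\mathbf B}_\theta)+(\mathbf U\mathbf A^H\mathbf R_x\dot{\mathbf A}_\theta\mathbf U^H)^{\mathsf T}\odot(\mathbf B^H\dot{\mathbf B}_\theta)+(\mathbf U\dot{\mathbf A}_\theta^H\mathbf R_x\mathbf A\mathbf U^H)^{\mathsf T}\odot(\dot{\mathbf B}_\theta^H\mathbf B)+(\mathbf U\dot{\mathbf A}_\theta^H\mathbf R_x\dot{\mathbf A}_\theta\mathbf U^H)^{\mathsf T}\odot(\mathbf B^H\mathbf B)$; $\mathbf F_{12}=(\mathbf U\mathbf A^H\mathbf R_x\mathbf A\mathbf U^H)^{\mathsf T}\odot(\dot{\mathbf B}_\theta^H\dot{\mathbf B}_\phi)+(\mathbf U\mathbf A^H\mathbf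 R_x\dot{\mathbf A}_\theta\mathbf U^H)^{\mathsf T}\odot(\mathbf B^H\dot{\mathbf B}_\phi)+(\mathbf U\dot{\mathbf A}_\phi^H\mathbf R_x\mathbf A\mathbf U^H)^{\mathsf T}\odot(\dot{\mathbf B}_\theta^H\mathbf B)+(\mathbf U\dot{\mathbf A}_\phi^H\mathbf R_x\dot{\mathbf A}_\theta\mathbf U^H)^{\mathsf T}\odot(\mathbf B^H\mathbf B)$; $\mathbf F_{22}$ = $\mathbf F_{11}$ with $\theta\to\phi$; $\mathbf F_{13}=(\mathbf A^H\mathbf R_x\mathbf A\mathbf U^H)^{\mathsf T}\odot(\dot{\mathbf B}_\theta^H\mathbf B)+(\mathbf A^H\mathbf R_x\dot{\mathbf A}_\theta\mathbf U^H)^{\mathsf T}\odot(\mathbf B^H\mathbf B)$; $\mathbf F_{23}$ = $\mathbf F_{13}$ with $\theta\to\phi$; $\mathbf F_{33}=(\mathbf A^H\mathbf R_x\mathbf A)^{\mathsf T}\odot(\mathbf B^H\mathbf B)$ ($\odot$ Hadamard product); the objective is considered where $\mathbf F(\mathbf W)$ is invertible. *)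

(* Defs.v *)
From HB Require Import structures.
From mathcomp Require Import all_boot all_order all_algebra.
From mathcomp Require Import all_classical all_reals all_analysis.
From mathcomp Require Import complex.
Set Implicit Arguments. Unset Strict Implicit. Unset Printing Implicit Defensive.
Import Order.TTheory GRing.Theory Num.Theory.
Local Open Scope ring_scope.
Local Open Scope complex_scope.

Section Defs.
Variable R : realType.
Local Notation C := R[i].

Definition hermT m n (A : 'M[C]_(m, n)) : 'M[C]_(n, m) := (map_mx conjc A)^T.

Definition hadamard m n (A B : 'M[C]_(m, n)) : 'M[C]_(m, n) :=
  \matrix_(i, j) (A i j * B i j).

Definition ReM m n (A : 'M[C]_(m, n)) : 'M[R]_(m, n) := map_mx (@complex.Re R) A.
Definition ImM m n (A : 'M[C]_(m, n)) : 'M[R]_(m, n) := map_mx (@complex.Im R) A.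

Definition steer N M (v : R -> R -> 'cV[C]_N) (th ph : 'I_M -> R) : 'M[C]_(N, M) :=
  \matrix_(i, m) v (th m) (ph m) i ord0.

Definition is_partial1 N (v dv : R -> R -> 'cV[C]_N) : Prop :=
  forall (t p : R) (k : 'I_N),
    is_derive t (1 : R) (fun s => complex.Re (v s p k ord0)) (complex.Re (dv t p k ord0)) /\
    is_derive t (1 : R) (fun s => complex.Im (v s p k ord0)) (complex.Im (dv t p k ord0)).

Definition is_partial2 N (v dv : R -> R -> 'cV[C]_N) : Prop :=
  forall (t p : R) (k : 'I_N),
    is_derive p (1 : R) (fun s => complex.Re (v t s k ord0)) (complex.Re (dv t p k ord0)) /\
    is_derive p (1 : R) (fun s => complex.Im (v t s k ord0)) (complex.Im (dv t p k ord0)).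

Section FIM.
Variables (Nt Nr M L : nat) (sigma2 : R) (alpha : 'I_M -> C).
Variables (A dAt dAp : 'M[C]_(Nt, M)) (B dBt dBp : 'M[C]_(Nr, M)).
Variable Rx : 'M[C]_Nt.

Definition Umx : 'M[C]_M := diag_mx (\row_m alpha m).

Definition F11g (dA1 dA2 : 'M[C]_(Nt, M)) (dB1 dB2 : 'M[C]_(Nr, M)) : 'M[C]_M :=
  hadamard (Umx *m hermT A *m Rx *m A *m hermT Umx)^T (hermT dB1 *m dB2)
  + hadamard (Umx *m hermT A *m Rx *m dA1 *m hermT Umx)^T (hermT B *m dB2)
  + hadamard (Umx *m hermT dA2 *m Rx *m A *m hermT Umx)^T (hermT dB1 *m B)
  + hadamard (Umx *m hermT dA2 *m Rx *m dA1 *m hermT Umx)^T (hermT B *m B).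

Definition F11 := F11g dAt dAt dBt dBt.
Definition F12 := F11g dAt dAp dBt dBp.
Definition F22 := F11g dAp dAp dBp dBp.

Definition F13g (dA : 'M[C]_(Nt, M)) (dB : 'M[C]_(Nr, M)) : 'M[C]_M :=
  hadamard (hermT A *m Rx *m A *m hermT Umx)^T (hermT dB *m B)
  + hadamard (hermT A *m Rx *m dA *m hermT Umx)^T (hermT B *m B).

Definition F13 := F13g dAt dBt.
Definition F23 := F13g dAp dBp.
Definition F33 : 'M[C]_M := hadamard (hermT A *m Rx *m A)^T (hermT B *m B).

Definition FIM : 'M[R]_((M + M) + (M + M)) :=
  ((2 * L%:R) / sigma2) *:
  block_mx
    (block_mx (ReM F11) (ReM F12) (ReM F12)^T (ReM F22))
    (block_mx (ReM F13) (- ImM F13) (ReM F23) (- ImM F23))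
    (block_mx (ReM F13)^T (ReM F23)^T (- ImM F13)^T (- ImM F23)^T)
    (block_mx (ReM F33) (- ImM F33) (- ImM F33)^T (ReM F33)).
End FIM.

End Defs.

(* Main.v *)
Require Import Defs.
From HB Require Import structures.
From mathcomp Require Import all_boot all_order all_algebra.
From mathcomp Require Import all_classical all_reals all_analysis.
From mathcomp Require Import complex.
From mathcomp Require Import ring lra zify.
Import Order.TTheory GRing.Theory Num.Theory.
Set Implicit Arguments. Unset Strict Implicit.
Local Open Scope ring_scope.
Local Open Scope complex_scope.

Section Aux.
Variable R : realType.
Local Notation C := R[i].
Local Notation cRe := (@complex.Re R).
Local Notation cIm := (@complex.Im R).

Lemma hermTE m n (X : 'M[C]_(m,n)) i j : hermT X i j = (X j i)^*.
Proof. by rewrite /hermT !mxE. Qed.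

Lemma hermT_mul m n p (X : 'M[C]_(m,n)) (Y : 'M[C]_(n,p)) :
  hermT (X *m Y) = hermT Y *m hermT X.
Proof. by rewrite /hermT map_mxM trmx_mul. Qed.

Lemma hermTK m n (X : 'M[C]_(m,n)) : hermT (hermT X) = X.
Proof. by apply/matrixP => i j; rewrite !hermTE conjcK. Qed.

Lemma hermT_Umx M (alpha : 'I_M -> C) :
  hermT (Umx alpha) = diag_mx (\row_m (alpha m)^*).
Proof.
apply/matrixP => i j; rewrite hermTE !mxE.
case: (eqVneq i j) => [->|ne]; first by rewrite !mulr1n.
by rewrite !mulr0n rmorph0.
Qed.

Definition ip p q (X Y : 'M[C]_(p,q)) : C := \sum_i \sum_t (X i t)^* * Y i t.

Lemma Umx_entry M (alpha : 'I_M -> C) (X : 'M[C]_M) n m :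
  (Umx alpha *m X *m hermT (Umx alpha)) n m = alpha n * X n m * (alpha m)^*.
Proof.
rewrite /Umx mul_diag_mx.
rewrite mxE (bigD1 m) //= big1 ?addr0.
  by rewrite !mxE eqxx mulr1n.
by move=> k /negPf km; rewrite !mxE eq_sym km mulr0n rmorph0 mulr0.
Qed.

Lemma sum2E (I J : finType) (a b : C) (f : J -> C) (g : I -> C) :
  (a * (\sum_t f t) * b) * (\sum_i g i) = \sum_i \sum_t (a * f t * b * g i).
Proof.
rewrite mulrC mulr_suml; apply: eq_bigr => i _.
rewrite mulr_sumr mulr_suml mulr_sumr; apply: eq_bigr => t _; ring.
Qed.

Section Gram.
Variables (Nt Nr M T : nat) (alpha : 'I_M -> C) (A : 'M[C]_(Nt, M)) (B : 'M[C]_(Nr, M)).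
Variable (W : 'M[C]_(Nt, T)).

Definition gfun (dB : 'M[C]_(Nr, M)) (PA PdA : 'M[C]_(M, T)) m : 'M[C]_(Nr, T) :=
  \matrix_(i, t) (alpha m * (dB i m * PA m t + B i m * PdA m t)).
Definition hfun (PA : 'M[C]_(M, T)) m : 'M[C]_(Nr, T) :=
  \matrix_(i, t) (B i m * PA m t).

Lemma prodE (X Y : 'M[C]_(Nt, M)) :
  hermT X *m (W *m hermT W) *m Y = (hermT X *m W) *m hermT (hermT Y *m W).
Proof. by rewrite hermT_mul hermTK !mulmxA. Qed.

Lemma UprodE (X Y : 'M[C]_(Nt, M)) n m :
  (Umx alpha *m hermT X *m (W *m hermT W) *m Y *m hermT (Umx alpha)) n m =
  alpha n * (\sum_t (hermT X *m W) n t * ((hermT Y *m W) m t)^*) * (alpha m)^*.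
Proof.
have -> : Umx alpha *m hermT X *m (W *m hermT W) *m Y *m hermT (Umx alpha) =
  Umx alpha *m (hermT X *m (W *m hermT W) *m Y) *m hermT (Umx alpha) by rewrite !mulmxA.
rewrite prodE Umx_entry mxE.
by congr (_ * _ * _); apply: eq_bigr => t _; rewrite hermTE.
Qed.

Lemma UprodE' (X Y : 'M[C]_(Nt, M)) n m :
  \sum_j (Umx alpha *m hermT X *m (W *m hermT W) *m Y) n j * hermT (Umx alpha) j m =
  alpha n * (\sum_t (hermT X *m W) n t * ((hermT Y *m W) m t)^*) * (alpha m)^*.
Proof. by rewrite -UprodE mxE. Qed.

Lemma F11g_ip dA1 dA2 dB1 dB2 m n :
  F11g alpha A B (W *m hermT W) dA1 dA2 dB1 dB2 m n =
  ip (gfun dB1 (hermT A *m W) (hermT dA1 *m W) m)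
     (gfun dB2 (hermT A *m W) (hermT dA2 *m W) n).
Proof.
rewrite /F11g !mxE !UprodE' !sum2E -!big_split /ip.
set PA := hermT A *m W; set P1 := hermT dA1 *m W; set P2 := hermT dA2 *m W.
apply: eq_bigr => i _; rewrite -!big_split; apply: eq_bigr => t _.
rewrite !hermTE !mxE !rmorphM !rmorphD /=; ring.
Qed.
Lemma Uprod2' (X Y : 'M[C]_(Nt, M)) n m :
  \sum_j (hermT X *m (W *m hermT W) *m Y) n j * hermT (Umx alpha) j m =
  1 * (\sum_t (hermT X *m W) n t * ((hermT Y *m W) m t)^*) * (alpha m)^*.
Proof.
transitivity ((hermT X *m (W *m hermT W) *m Y *m hermT (Umx alpha)) n m).
  by rewrite mxE.
rewrite hermT_Umx mul_mx_diag mxE prodE mul1r !mxE; congr (_ * _).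
by apply: eq_bigr => t _; rewrite hermTE.
Qed.

Lemma Uprod3' (X Y : 'M[C]_(Nt, M)) n m :
  \sum_j (hermT X *m (W *m hermT W)) n j * Y j m =
  1 * (\sum_t (hermT X *m W) n t * ((hermT Y *m W) m t)^*) * 1.
Proof.
transitivity ((hermT X *m (W *m hermT W) *m Y) n m).
  by rewrite mxE.
rewrite prodE mul1r mulr1 mxE.
by apply: eq_bigr => t _; rewrite hermTE.
Qed.

Lemma F13g_ip dA dB m n :
  F13g alpha A B (W *m hermT W) dA dB m n =
  ip (gfun dB (hermT A *m W) (hermT dA *m W) m) (hfun (hermT A *m W) n).
Proof.
rewrite /F13g !mxE !Uprod2' !sum2E -!big_split /ip.
set PA := hermT A *m W; set P1 := hermT dA *m W.
apply: eq_bigr => i _; rewrite -!big_split; apply: eq_bigr => t _.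
rewrite !hermTE !mxE !rmorphM !rmorphD /=; ring.
Qed.

Lemma F33_ip m n :
  F33 A B (W *m hermT W) m n = ip (hfun (hermT A *m W) m) (hfun (hermT A *m W) n).
Proof.
rewrite /F33 !mxE !Uprod3' !sum2E /ip.
set PA := hermT A *m W.
apply: eq_bigr => i _; apply: eq_bigr => t _.
rewrite !hermTE !mxE !rmorphM /=; ring.
Qed.
End Gram.

Lemma split_lshift m n (i : 'I_m) : fintype.split (lshift n i) = inl i.
Proof. exact: (unsplitK (inl i)). Qed.
Lemma split_rshift m n (i : 'I_n) : fintype.split (rshift m i) = inr i.
Proof. exact: (unsplitK (inr i)). Qed.

Definition rip p q (X Y : 'M[C]_(p,q)) : R :=
  \sum_i \sum_t (cRe (X i t) * cRe (Y i t) + cIm (X i t) * cIm (Y i t)).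

Lemma Re_sum (I : finType) (f : I -> C) : cRe (\sum_i f i) = \sum_i cRe (f i).
Proof. by rewrite (@raddf_sum _ _ (@complex.Re R : Rcomplex R -> R)). Qed.
Lemma Im_sum (I : finType) (f : I -> C) : cIm (\sum_i f i) = \sum_i cIm (f i).
Proof. by rewrite (@raddf_sum _ _ (@complex.Im R : Rcomplex R -> R)). Qed.

Lemma ripE p q (X Y : 'M[C]_(p,q)) : rip X Y = cRe (ip X Y).
Proof.
rewrite /rip /ip Re_sum; apply: eq_bigr => i _; rewrite Re_sum; apply: eq_bigr => t _.
case: (X i t) => a b; case: (Y i t) => c d /=; ring.
Qed.

Lemma ripC p q (X Y : 'M[C]_(p,q)) : rip X Y = rip Y X.
Proof.
by apply: eq_bigr => i _; apply: eq_bigr => t _; rewrite mulrC [cIm _ * _]mulrC.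
Qed.

Lemma rip_iE p q (X Y : 'M[C]_(p,q)) : rip X ('i *: Y) = - cIm (ip X Y).
Proof.
rewrite /rip /ip Im_sum -sumrN; apply: eq_bigr => i _; rewrite Im_sum -sumrN.
apply: eq_bigr => t _; rewrite !mxE.
case: (X i t) => a b; case: (Y i t) => c d /=; ring.
Qed.

Lemma rip_ii p q (X Y : 'M[C]_(p,q)) : rip ('i *: X) ('i *: Y) = rip X Y.
Proof.
apply: eq_bigr => i _; apply: eq_bigr => t _; rewrite !mxE.
case: (X i t) => a b; case: (Y i t) => c d /=; ring.
Qed.

Definition GR n p q (g : 'I_n -> 'M[C]_(p,q)) : 'M[R]_n :=
  \matrix_(j, k) rip (g j) (g k).

Lemma sum3x (I J K : finType) (F : I -> J -> K -> R) :
  \sum_i \sum_j \sum_k F i j k = \sum_j \sum_k \sum_i F i j k.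
Proof. rewrite exchange_big; apply: eq_bigr => j _; exact: exchange_big. Qed.

Section GRsec.
Variables (n p q : nat) (g : 'I_n -> 'M[C]_(p,q)) (x : 'cV[R]_n).
Definition ReS i t := \sum_k x k 0 * cRe (g k i t).
Definition ImS i t := \sum_k x k 0 * cIm (g k i t).

Lemma GRxE l : (GR g *m x) l 0 =
  \sum_i \sum_t (cRe (g l i t) * ReS i t + cIm (g l i t) * ImS i t).
Proof.
rewrite mxE.
transitivity (\sum_k \sum_i \sum_t
   (cRe (g l i t) * (x k 0 * cRe (g k i t)) + cIm (g l i t) * (x k 0 * cIm (g k i t)))).
  apply: eq_bigr => k _; rewrite mxE /rip mulr_suml; apply: eq_bigr => i _.
  rewrite mulr_suml; apply: eq_bigr => t _; ring.
rewrite sum3x; apply: eq_bigr => i _; apply: eq_bigr => t _.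
by rewrite /ReS /ImS !mulr_sumr -big_split.
Qed.

Lemma quadE : (x^T *m GR g *m x) 0 0 =
  \sum_i \sum_t (ReS i t ^+ 2 + ImS i t ^+ 2).
Proof.
rewrite -mulmxA mxE.
transitivity (\sum_k \sum_i \sum_t
   (x k 0 * cRe (g k i t) * ReS i t + x k 0 * cIm (g k i t) * ImS i t)).
  apply: eq_bigr => k _; rewrite GRxE mxE mulr_sumr; apply: eq_bigr => i _.
  rewrite mulr_sumr; apply: eq_bigr => t _; ring.
rewrite sum3x; apply: eq_bigr => i _; apply: eq_bigr => t _.
by rewrite big_split /= -!mulr_suml.
Qed.

Lemma quad_ge0 : 0 <= (x^T *m GR g *m x) 0 0.
Proof.
rewrite quadE; apply: sumr_ge0 => i _; apply: sumr_ge0 => t _.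
by rewrite addr_ge0 // sqr_ge0.
Qed.

Lemma quad0 : (x^T *m GR g *m x) 0 0 = 0 -> GR g *m x = 0.
Proof.
rewrite quadE => H.
have H0 : forall i t, ReS i t = 0 /\ ImS i t = 0.
  move=> i t.
  have P0 : forall i (_ : true), 0 <= \sum_t (ReS i t ^+ 2 + ImS i t ^+ 2).
    by move=> i' _; apply: sumr_ge0 => t' _; rewrite addr_ge0 // sqr_ge0.
  have Hi := psumr_eq0P P0 H (i := i) isT.
  have Ht := psumr_eq0P (fun t _ => addr_ge0 (sqr_ge0 (ReS i t)) (sqr_ge0 (ImS i t))) Hi (i := t) isT.
  move/eqP: Ht; rewrite paddr_eq0 ?sqr_ge0 // !sqrf_eq0 => /andP[/eqP -> /eqP ->].
  by [].
apply/matrixP => l j; rewrite (ord1 j) GRxE mxE.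
apply: big1 => i _; apply: big1 => t _.
by have [-> ->] := H0 i t; rewrite !mulr0 addr0.
Qed.
End GRsec.

Lemma col_mulmx (m n p : nat) (A : 'M[R]_(m,n)) (B : 'M[R]_(n,p)) j :
  A *m col j B = col j (A *m B).
Proof. by apply/matrixP => i l; rewrite !mxE; apply: eq_bigr => k _; rewrite !mxE. Qed.

Lemma diag_quad n (F : 'M[R]_n) j : F \in unitmx ->
  invmx F j j = ((col j (invmx F))^T *m F *m col j (invmx F)) 0 0.
Proof.
move=> uF; set N := invmx F.
rewrite -mulmxA col_mulmx (mulmxV uF) tr_col !mxE.
rewrite (bigD1 j) //= big1 ?addr0; first by rewrite !mxE eqxx mulr1.
by move=> k /negPf kj; rewrite !mxE kj mulr0.
Qed.

Lemma trinv_pos n p q (g : 'I_n -> 'M[C]_(p,q)) (k : R) (j0 : 'I_n) :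
  0 < k -> (k *: GR g) \in unitmx -> 0 < \tr (invmx (k *: GR g)).
Proof.
move=> k0 uF; set F := k *: GR g.
have hq : forall j, invmx F j j = k * ((col j (invmx F))^T *m GR g *m col j (invmx F)) 0 0.
  by move=> j; rewrite diag_quad // /F -scalemxAr -scalemxAl mxE.
have ge0 : forall j (_ : true), 0 <= invmx F j j.
  by move=> j _; rewrite hq; apply: mulr_ge0; [exact: ltW | exact: quad_ge0].
rewrite lt_def; apply/andP; split; last by apply: sumr_ge0.
apply/eqP => tr0.
have := psumr_eq0P ge0 tr0 (i := j0) isT.
rewrite hq => /eqP; rewrite mulf_eq0 (gt_eqF k0) /= => /eqP /quad0 H.
have : (F *m col j0 (invmx F)) j0 0 = 0.
  by rewrite /F -scalemxAl H scaler0 mxE.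
by rewrite col_mulmx (mulmxV uF) !mxE eqxx => /eqP; rewrite oner_eq0.
Qed.

Lemma ipC p q (X Y : 'M[C]_(p,q)) : ip Y X = (ip X Y)^*.
Proof.
rewrite /ip rmorph_sum; apply: eq_bigr => i _; rewrite rmorph_sum.
by apply: eq_bigr => t _; rewrite rmorphM /= conjcK mulrC.
Qed.

Lemma Re_conj (z : C) : cRe (z^*) = cRe z.
Proof. by case: z. Qed.
Lemma Im_conj (z : C) : cIm (z^*) = - cIm z.
Proof. by case: z. Qed.

Lemma ReME m n (X : 'M[C]_(m,n)) i j : Defs.ReM X i j = cRe (X i j).
Proof. by rewrite mxE. Qed.
Lemma ImME m n (X : 'M[C]_(m,n)) i j : Defs.ImM X i j = cIm (X i j).
Proof. by rewrite mxE. Qed.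
Lemma trE m n (X : 'M[R]_(m,n)) i j : X^T i j = X j i.
Proof. by rewrite mxE. Qed.
Lemma oppE m n (X : 'M[R]_(m,n)) i j : (- X) i j = - X i j.
Proof. by rewrite mxE. Qed.

Section FIMsec.
Variables (Nt Nr M T : nat) (alpha : 'I_M -> C).
Variables (A dAt dAp : 'M[C]_(Nt, M)) (B dBt dBp : 'M[C]_(Nr, M)).

Definition gall (PA PAt PAp : 'M[C]_(M, T)) (k : 'I_((M + M) + (M + M))) : 'M[C]_(Nr, T) :=
  match fintype.split k with
  | inl k1 => match fintype.split k1 with
              | inl m => gfun alpha B dBt PA PAt m
              | inr m => gfun alpha B dBp PA PAp m end
  | inr k2 => match fintype.split k2 with
              | inl m => hfun B PA m
              | inr m => 'i *: hfun B PA m end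
  end.

Lemma FIM_GR (L : nat) (sigma2 : R) (W : 'M[C]_(Nt, T)) :
  FIM L sigma2 alpha A dAt dAp B dBt dBp (W *m hermT W) =
  ((2 * L%:R) / sigma2) *: GR (gall (hermT A *m W) (hermT dAt *m W) (hermT dAp *m W)).
Proof.
rewrite /FIM; congr (_ *: _); apply/matrixP => j k; rewrite [RHS]mxE.
case: (split_ordP j) => j1 ->; case: (split_ordP j1) => a ->;
case: (split_ordP k) => k1 ->; case: (split_ordP k1) => b ->;
rewrite /gall ?split_lshift ?split_rshift ?split_lshift ?split_rshift
   ?(block_mxEul, block_mxEur, block_mxEdl, block_mxEdr) ?(ReME, ImME, trE, oppE)
   /F11 /F12 /F22 /F13 /F23 ?F11g_ip ?F13g_ip ?F33_ip ?rip_ii.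
all: first [ by rewrite ripE | by rewrite rip_iE | by rewrite ripC ripE
           | by rewrite ripC rip_iE ].
Qed.
End FIMsec.
Lemma hermT_row m n1 n2 (X : 'M[C]_(m,n1)) (Y : 'M[C]_(m,n2)) :
  hermT (row_mx X Y) = col_mx (hermT X) (hermT Y).
Proof. by rewrite /hermT map_row_mx tr_row_mx. Qed.

Lemma RxE m n1 n2 (X : 'M[C]_(m,n1)) (Y : 'M[C]_(m,n2)) :
  X *m hermT X + Y *m hermT Y = row_mx X Y *m hermT (row_mx X Y).
Proof. by rewrite hermT_row mul_row_col. Qed.

Lemma hermTB m n (X Y : 'M[C]_(m,n)) : hermT (X - Y) = hermT X - hermT Y.
Proof. by apply/matrixP => i j; rewrite !(hermTE, mxE) rmorphB. Qed.

Lemma hermTZ m n (a : C) (X : 'M[C]_(m,n)) : hermT (a *: X) = a^* *: hermT X.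
Proof. by apply/matrixP => i j; rewrite !(hermTE, mxE) rmorphM. Qed.

Definition sq m n (X : 'M[C]_(m,n)) : R :=
  \sum_i \sum_j (cRe (X i j) ^+ 2 + cIm (X i j) ^+ 2).

Lemma sq_ge0 m n (X : 'M[C]_(m,n)) : 0 <= sq X.
Proof. by apply: sumr_ge0 => i _; apply: sumr_ge0 => j _; rewrite addr_ge0 // sqr_ge0. Qed.

Lemma sq_gt0 m n (X : 'M[C]_(m,n)) : X != 0 -> 0 < sq X.
Proof.
move=> nz; rewrite lt_def sq_ge0 andbT; apply/eqP => H.
move/eqP: nz; apply; apply/matrixP => i j; rewrite mxE.
have P0 : forall i (_ : true), 0 <= \sum_j (cRe (X i j) ^+ 2 + cIm (X i j) ^+ 2).
  by move=> i' _; apply: sumr_ge0 => t' _; rewrite addr_ge0 // sqr_ge0.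
have Hi := psumr_eq0P P0 H (i := i) isT.
have Ht := psumr_eq0P (fun t _ => addr_ge0 (sqr_ge0 (cRe (X i t))) (sqr_ge0 (cIm (X i t)))) Hi (i := j) isT.
move/eqP: Ht; rewrite paddr_eq0 ?sqr_ge0 // !sqrf_eq0 => /andP[/eqP a /eqP b].
by move: a b; case: (X i j) => x y /= -> ->.
Qed.

Lemma trsq m n (X : 'M[C]_(m,n)) : \tr (X *m hermT X) = (sq X)%:C.
Proof.
rewrite /mxtrace /sq (@rmorph_sum _ _ (real_complex R)); apply: eq_bigr => i _.
rewrite mxE (@rmorph_sum _ _ (real_complex R)); apply: eq_bigr => j _.
rewrite hermTE; case: (X i j) => a b /=.
by apply/eqP; rewrite eq_complex /=; apply/andP; split; apply/eqP; ring.
Qed.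

Lemma sqZ m n (c : R) (X : 'M[C]_(m,n)) : sq (c%:C *: X) = c ^+ 2 * sq X.
Proof.
rewrite /sq mulr_sumr; apply: eq_bigr => i _; rewrite mulr_sumr; apply: eq_bigr => j _.
by rewrite mxE; case: (X i j) => a b /=; ring.
Qed.
Lemma perturb Nt Ns (Ws : 'M[C]_(Nt,Ns)) (y : 'cV[C]_Ns) (z : 'cV[C]_Nt) (a : C) :
  Ws *m y = z ->
  (Ws - a *: (z *m hermT y)) *m hermT (Ws - a *: (z *m hermT y)) =
  Ws *m hermT Ws - (a + a^* - a * a^* * (hermT y *m y) 0 0) *: (z *m hermT z).
Proof.
move=> hz.
have e1 : Ws *m (y *m hermT z) = z *m hermT z by rewrite mulmxA hz.
have e2 : z *m hermT y *m hermT Ws = z *m hermT z by rewrite -mulmxA -hermT_mul hz.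
have e3 : z *m hermT y *m (y *m hermT z) = ((hermT y *m y) 0 0) *: (z *m hermT z).
  by rewrite mulmxA -(mulmxA z) {1}(mx11_scalar (hermT y *m y)) mul_mx_scalar -scalemxAl.
rewrite hermTB hermTZ hermT_mul hermTK mulmxBl !mulmxBr -!scalemxAl -!scalemxAr.
rewrite e1 e2 e3 !scalerA.
set Z := z *m hermT z; set P := Ws *m hermT Ws.
by apply/matrixP => i j; rewrite !mxE; ring.
Qed.
Lemma GR_ext n p q (g g' : 'I_n -> 'M[C]_(p,q)) : g =1 g' -> GR g = GR g'.
Proof. by move=> e; apply/matrixP => j k; rewrite !mxE !e. Qed.

Lemma rip_scale p q (c : R) (X Y : 'M[C]_(p,q)) :
  rip (c%:C *: X) (c%:C *: Y) = c ^+ 2 * rip X Y.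
Proof.
rewrite /rip mulr_sumr; apply: eq_bigr => i _; rewrite mulr_sumr; apply: eq_bigr => j _.
by rewrite !mxE; case: (X i j) => a b; case: (Y i j) => a' b' /=; ring.
Qed.

Lemma GR_scale n p q (c : R) (g : 'I_n -> 'M[C]_(p,q)) :
  GR (fun k => c%:C *: g k) = c ^+ 2 *: GR g.
Proof. by apply/matrixP => j k; rewrite !mxE rip_scale. Qed.

Lemma gall_scale Nr M T (alpha : 'I_M -> C) (B dBt dBp : 'M[C]_(Nr, M)) (PA PAt PAp : 'M[C]_(M, T)) (c : R) k :
  gall alpha B dBt dBp (c%:C *: PA) (c%:C *: PAt) (c%:C *: PAp) k =
  c%:C *: gall alpha B dBt dBp PA PAt PAp k.
Proof.
rewrite /gall; case: (fintype.split k) => [k1|k2]; case: (fintype.split _) => m;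
  apply/matrixP => i t; rewrite !mxE; ring.
Qed.

Lemma ker_vec m n p (Q : 'M[C]_(m,n)) (Ws : 'M[C]_(p,n)) :
  (m < \rank Ws)%N -> exists y : 'cV_n, Q *m y = 0 /\ Ws *m y != 0.
Proof.
move=> Hr; set K := kermx Q^T.
case: (pickP (fun i => row i K *m Ws^T != 0)) => [i Hi | H].
  exists (row i K)^T; split.
    have h0 : row i K *m Q^T = 0 by apply/sub_kermxP; exact: row_sub.
    by rewrite -[Q]trmxK -trmx_mul h0 trmx0.
  by rewrite -[Ws]trmxK -trmx_mul trmx_eq0.
have KX : K *m Ws^T = 0.
  by apply/row_matrixP => i; rewrite row_mul row0; move: (H i) => /negbFE/eqP.
have /mxrankS : (K <= kermx Ws^T)%MS by apply/sub_kermxP.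
rewrite !mxrank_ker !mxrank_tr => Hle.
have h1 := rank_leq_row Q; have h2 := rank_leq_col Ws; lia.
Qed.
End Aux.

Section Aux2.
Variable R : realType.
Local Notation C := R[i].
Local Notation cRe := (@complex.Re R).
Local Notation cIm := (@complex.Im R).

Lemma power_pert Nt K Ns (Wc : 'M[C]_(Nt,K)) (Ws : 'M[C]_(Nt,Ns)) (y : 'cV[C]_Ns) (sr : R) :
  (hermT y *m y) 0 0 = sr%:C -> sr != 0 ->
  sq (row_mx Wc (Ws - (sr%:C)^-1 *: ((Ws *m y) *m hermT y))) =
  sq (row_mx Wc Ws) - sq (Ws *m y) / sr.
Proof.
move=> hs1 sr0.
suff H : (sq (row_mx Wc (Ws - (sr%:C)^-1 *: ((Ws *m y) *m hermT y))))%:C =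
         (sq (row_mx Wc Ws) - sq (Ws *m y) / sr)%:C :> C.
  by move/(congr1 (@complex.Re R)): H.
have srC : sr%:C != 0 :> C by rewrite eq_complex /= (negPf sr0).
set c := (sr%:C)^-1.
have cc : conjc c = c by rewrite /c conjc_inv conjc_real.
have coef : c + conjc c - c * conjc c * sr%:C = c by rewrite cc /c; field.
rewrite -!trsq -!RxE perturb // hs1 coef.
rewrite rmorphB rmorphM fmorphV /= -!trsq -RxE -scaleNr !mxtraceD mxtraceZ /c.
ring.
Qed.
Lemma num1 (Pt p' : R) : 0 < Pt -> 0 <= p' -> p' < Pt ->
  1 < 2 * Pt / (Pt + p') /\ 2 * Pt / (Pt + p') * p' <= Pt.
Proof.
move=> h1 h2 h3; have den0 : 0 < Pt + p' by lra.
split; first by rewrite ltr_pdivlMr //; lra.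
rewrite mulrAC ler_pdivrMr //.
have : 0 <= Pt * (Pt - p') by apply: mulr_ge0; lra.
nra.
Qed.

Lemma num2 (d t l : R) : 0 < d -> 0 < t -> 1 < l -> - d * (l^-1 * t) <= - d * t -> False.
Proof.
move=> d0 t0 l1 h.
have li1 : l^-1 < 1 by rewrite invf_lt1 //; lra.
have : 0 < d * (t * (1 - l^-1)) by apply: mulr_gt0 => //; apply: mulr_gt0 => //; lra.
nra.
Qed.
End Aux2.

Unset Implicit Arguments.
Set Strict Implicit.

Theorem lemma5 (R : realType) (Nt Nr K M L Ns : nat)
  (sigma2 Pt delta_s : R)
  (a da_t da_p : R -> R -> 'cV[R[i]]_Nt)
  (b db_t db_p : R -> R -> 'cV[R[i]]_Nr)
  (theta phi : 'I_M -> R) (alpha : 'I_M -> R[i])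
  (Wc : 'M[R[i]]_(Nt, K)) (Ws : 'M[R[i]]_(Nt, Ns)) :
  (0 < Nt)%N -> (0 < Nr)%N -> (0 < K)%N -> (0 < M)%N -> (0 < L)%N ->
  0 < sigma2 -> 0 < Pt -> 0 < delta_s ->
  is_partial1 a da_t -> is_partial2 a da_p ->
  is_partial1 b db_t -> is_partial2 b db_p ->
  let F := fun (Wc' : 'M[R[i]]_(Nt, K)) (Ws' : 'M[R[i]]_(Nt, Ns)) =>
    FIM L sigma2 alpha
      (steer a theta phi) (steer da_t theta phi) (steer da_p theta phi)
      (steer b theta phi) (steer db_t theta phi) (steer db_p theta phi)
      (Wc' *m hermT Wc' + Ws' *m hermT Ws') in
  let feasible := fun (Wc' : 'M[R[i]]_(Nt, K)) (Ws' : 'M[R[i]]_(Nt, Ns)) =>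
    complex.Re (\tr (row_mx Wc' Ws' *m hermT (row_mx Wc' Ws'))) <= Pt
    /\ F Wc' Ws' \in unitmx in
  let obj := fun (Wc' : 'M[R[i]]_(Nt, K)) (Ws' : 'M[R[i]]_(Nt, Ns)) =>
    - delta_s * \tr (invmx (F Wc' Ws')) in
  feasible Wc Ws ->
  (forall (Wc' : 'M[R[i]]_(Nt, K)) (Ws' : 'M[R[i]]_(Nt, Ns)),
      feasible Wc' Ws' -> obj Wc' Ws' <= obj Wc Ws) ->
  (\rank Ws <= 3 * M)%N.
Proof.
move=> hNt hNr hK hM hL hs hPt hd pa1 pa2 pb1 pb2 F feasible obj [hpow hunit] hopt.
set A0 := steer a theta phi; set dAt0 := steer da_t theta phi; set dAp0 := steer da_p theta phi.
set B0 := steer b theta phi; set dBt0 := steer db_t theta phi; set dBp0 := steer db_p theta phi.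
set kap := 2 * L%:R / sigma2.
have kap0 : 0 < kap.
  rewrite /kap divr_gt0 // mulr_gt0 // ltr0n //.
have FE : forall (Wc' : 'M[R[i]]_(Nt, K)) (Ws' : 'M[R[i]]_(Nt, Ns)), F Wc' Ws' = kap *: GR (gall alpha B0 dBt0 dBp0
    (hermT A0 *m row_mx Wc' Ws') (hermT dAt0 *m row_mx Wc' Ws') (hermT dAp0 *m row_mx Wc' Ws')).
  by move=> Wc' Ws'; rewrite /F RxE FIM_GR.
have PE : forall (Wc' : 'M[R[i]]_(Nt, K)) (Ws' : 'M[R[i]]_(Nt, Ns)), complex.Re (\tr (row_mx Wc' Ws' *m hermT (row_mx Wc' Ws'))) = sq (row_mx Wc' Ws').
  by move=> Wc' Ws'; rewrite trsq.
rewrite leqNgt; apply/negP => Hr.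
have [y [hQ hz]] : exists y : 'cV_Ns,
   col_mx (hermT A0 *m Ws) (col_mx (hermT dAt0 *m Ws) (hermT dAp0 *m Ws)) *m y = 0
   /\ Ws *m y != 0.
  by apply: ker_vec; lia.
move: hQ; rewrite !mul_col_mx => /eqP; rewrite !col_mx_eq0 => /andP[/eqP hA /andP[/eqP hAt /eqP hAp]].
set z := Ws *m y.
have ynz : hermT y != 0.
  apply: contraNneq hz => hy; rewrite -[y]hermTK hy.
  by apply/eqP/matrixP => i j; rewrite !mxE big1 // => k _; rewrite hermTE mxE rmorph0 mulr0.
set sr := sq (hermT y).
have sr0 : 0 < sr by apply: sq_gt0.
have hs1 : (hermT y *m y) 0 0 = sr%:C.
  by rewrite -trsq hermTK /mxtrace big_ord1.
set c := (sr%:C)^-1.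
set Ws' := Ws - c *: (z *m hermT y).
have hP : forall X : 'M[R[i]]_(Nt, M), hermT X *m Ws *m y = 0 -> hermT X *m Ws' = hermT X *m Ws.
  move=> X hX; rewrite /Ws' mulmxBr -scalemxAr mulmxA /z mulmxA hX mul0mx scaler0 subr0 //.
have FW' : F Wc Ws' = F Wc Ws.
  by rewrite !FE !mul_mx_row !hP.
clearbody sr.
have hp' := @power_pert R Nt K Ns Wc Ws y sr hs1 (lt0r_neq0 sr0).
rewrite -/z -/c -/Ws' in hp'.
have zq : 0 < sq z by apply: sq_gt0.
set p' := sq (row_mx Wc Ws') in hp'.
have p'0 : 0 <= p' by apply: sq_ge0.
set p := sq (row_mx Wc Ws) in hp'.
have hpow' : p <= Pt by move: hpow; rewrite PE.
have hzs : 0 < sq z / sr by apply: divr_gt0.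
have ep' : sq (row_mx Wc Ws') = p' by [].
clearbody p p'.
have p'lt : p' < Pt by rewrite hp'; lra.
pose lam := 2 * Pt / (Pt + p').
have [lam1 lamp] : 1 < lam /\ lam * p' <= Pt by apply: num1.
have lam0 : 0 <= lam by apply: ltW; apply: lt_trans lam1.
pose mu := Num.sqrt lam.
have mu2 : mu ^+ 2 = lam by rewrite sqr_sqrtr.
set Wc2 := mu%:C *: Wc; set Ws2 := mu%:C *: Ws'.
have hrow : row_mx Wc2 Ws2 = mu%:C *: row_mx Wc Ws' by rewrite scale_row_mx.
have F2 : F Wc2 Ws2 = lam *: F Wc Ws.
  rewrite -FW' !FE hrow -!scalemxAr.
  rewrite (GR_ext (fun k => gall_scale alpha B0 dBt0 dBp0 _ _ _ mu k)) GR_scale mu2.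
  by rewrite !scalerA mulrC.
have pow2 : complex.Re (\tr (row_mx Wc2 Ws2 *m hermT (row_mx Wc2 Ws2))) <= Pt.
  by rewrite PE hrow sqZ mu2 ep'.
have lamU : lam \is a GRing.unit by rewrite unitfE; apply: lt0r_neq0; apply: lt_trans lam1.
have unit2 : F Wc2 Ws2 \in unitmx by rewrite F2 unitmxZ.
have tpos : 0 < \tr (invmx (F Wc Ws)).
  have hu := hunit; rewrite FE in hu; rewrite FE.
  exact: (trinv_pos (lshift (M + M) (lshift M (Ordinal hM))) kap0 hu).
have := hopt Wc2 Ws2 (conj pow2 unit2).
have unitL := unit2; rewrite F2 in unitL.
rewrite /obj F2 (invmxZ unitL) mxtraceZ.
exact: (num2 hd tpos lam1).
Qed.
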